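(* Let $G$ be a finite group, $p$ a prime, $P$ a Sylow $p$-subgroup of $G$, $I$ the kernel of the restriction map $R(G)\to R(P)$, and $h$ the number of conjugacy classes of elements of $G$ whose order is a power of $p$. Then $R(G)/I\cong\mathbb Z^h$ as Abelian groups.
   Context: $R(G)$ denotes the ring of virtual complex representations of $G$. *)

(* Defs.v *)
From mathcomp Require Import all_boot all_order all_algebra all_fingroup all_solvable all_field all_character vcharacter.
Set Implicit Arguments. Unset Strict Implicit. Unset Printing Implicit Defensive.
Import GRing.Theory Num.Theory.
Local Open Scope ring_scope.

(* R(G), the ring of virtual characters, is 'Z[irr G] (as a subset of 'CF(G)). *)
Definition virtual_chars (gT : finGroupType) (G : {group gT}) : pred 'CF(G) :=
  [pred phi | phi \in 'Z[irr G]%g].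

Definition res_kernel (gT : finGroupType) (G P : {group gT}) : pred 'CF(G) :=
  [pred phi | (phi \in 'Z[irr G]%g) && ('Res[P] phi == 0)].

Definition num_p_classes (p : nat) (gT : finGroupType) (G : {group gT}) : nat :=
  #|[set xG in classes G | p.-elt (repr xG)]%g|%N.

(* A / B ≅ Z^h as abelian groups (B ⊆ A subgroups of the Z-module V), expressed
   via the first isomorphism theorem: there is a group homomorphism A -> Z^h
   that is surjective with kernel exactly B. *)
Definition quotient_iso_Zpow (V : zmodType) (A B : pred V) (h : nat) : Prop :=
  exists f : V -> 'rV[int]_h,
    [/\ {in A &, forall a b, f (a - b) = f a - f b},
        forall z : 'rV[int]_h, exists2 a, a \in A & f a = z
      & {in A, forall a, (f a == 0) = (a \in B)}].

Arguments virtual_chars {gT} G.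
Arguments res_kernel {gT} G P.
Arguments num_p_classes p {gT} G.

(* Main.v *)
Require Import Defs.
From mathcomp Require Import all_boot all_order all_algebra all_fingroup all_solvable all_field all_character vcharacter.
From mathcomp Require Import zify.
Set Implicit Arguments. Unset Strict Implicit. Unset Printing Implicit Defensive.
Import GRing.Theory Num.Theory.
Local Open Scope ring_scope.
Lemma snf_prefix (d : seq int) (n m : nat) : sorted dvdz d ->
  let r := minn (find (pred1 (0:int)) d) (minn n m) in
  (forall i, (i < r)%N -> d`_i != 0) /\ (forall i, (r <= i)%N -> (i < n)%N -> (i < m)%N -> d`_i = 0).
Proof.
move=> sd r; split=> i ir.
  have H : (i < find (pred1 (0:int)) d)%N by apply: leq_trans ir (geq_minl _ _).
  by have := before_find (0:int) H; rewrite /= => ->.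
move=> iN iM.
have hf : (find (pred1 (0:int)) d <= i)%N.
  by move: ir iN iM; rewrite /r; lia.
have [fs|fs] := ltnP (find (pred1 (0:int)) d) (size d); last first.
  by rewrite nth_default //; apply: leq_trans fs hf.
have [is_|is_] := ltnP i (size d); last by rewrite nth_default.
have hh : has (pred1 (0:int)) d by rewrite has_find.
have h0 : d`_(find (pred1 (0:int)) d) = 0 by apply/eqP; exact: (nth_find (0:int) hh).
have tr : transitive dvdz by move=> a b c; apply: dvdz_trans.
have rf : reflexive dvdz by move=> a; apply: dvdzz.
have := @sorted_leq_nth _ _ tr rf 0 _ sd _ _ fs is_ hf.
by rewrite h0 /= => H; apply/eqP; rewrite -dvd0z.
Qed.

Lemma unit_map_int n (L : 'M[int]_n) : L \in unitmx ->
  (map_mx (intr : int -> algC) L) \in unitmx.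
Proof.
move=> uL; have h : map_mx (intr : int -> algC) L *m map_mx intr (invmx L) = 1%:M.
  by rewrite -map_mxM mulmxV // map_mx1.
by case: (mulmx1_unit h).
Qed.

Lemma snf_lattice n m (M : 'M[int]_(n, m)) :
  exists r, (\rank (map_mx (intr : int -> algC) M) = r) /\
  exists f : 'rV[int]_n -> 'rV[int]_r,
   [/\ forall a b, f (a - b) = f a - f b, forall z, exists a, f a = z
     & forall a, (f a == 0) = (a *m M == 0)].
Proof.
have [L uL [R uR [d sd dM]]] := int_Smith_normal_form M.
set D := \matrix_(i, j) _ in dM.
have [dnz dz] := snf_prefix n m sd.
set r := minn _ _ in dnz dz.
have rn : (r <= n)%N by rewrite /r; lia.
have rm : (r <= m)%N by rewrite /r; lia.
have key : forall b : 'rV[int]_n, (b *m D == 0) = [forall k : 'I_r, b 0 (widen_ord rn k) == 0].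
  move=> b; apply/eqP/forallP => [bD0 k | bk].
    have := congr1 (fun A : 'rV[int]_m => A 0 (widen_ord rm k)) bD0.
    rewrite mxE (bigD1 (widen_ord rn k)) //= big1 => [|i ne]; last first.
      rewrite mxE; case: eqP => [ij|]; last by rewrite mulr0n mulr0.
      by case/eqP: ne; apply: val_inj.
    rewrite mxE eqxx mulr1n addr0 mxE => /eqP; rewrite mulf_eq0 (negPf (dnz _ (ltn_ord k))) orbF.
    by [].
  apply/rowP => j; rewrite !mxE big1 // => i _; rewrite mxE.
  case: eqP => [ij|]; last by rewrite mulr0n mulr0.
  case: (ltnP i r) => ir.
    have := bk (Ordinal ir); have -> : widen_ord rn (Ordinal ir) = i by apply: val_inj.
    by move/eqP ->; rewrite mul0r.
  by rewrite (dz i ir (ltn_ord i)) ?mul0rn ?mulr0 // ij.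
pose f := fun a : 'rV[int]_n => \row_(k < r) (a *m L) 0 (widen_ord rn k).
exists r; split.
  rewrite dM !map_mxM mxrankMfree ?row_free_unit ?unit_map_int //.
  rewrite eqmxMfull ?row_full_unit ?unit_map_int //.
  pose u := \row_(i < n) (if (i < r)%N then (d`_i)%:~R else 1 : algC).
  have uu : diag_mx u \in unitmx.
    rewrite unitmxE det_diag unitfE; apply/prodf_neq0 => i _; rewrite mxE.
    by case: ifP => ir; [rewrite intr_eq0 dnz | rewrite oner_neq0].
  have -> : map_mx intr D = diag_mx u *m pid_mx r.
    apply/matrixP => i j; rewrite mul_diag_mx !mxE.
    case: (ltnP i r) => ir; case: eqP => ij; rewrite ?andbT ?andbF ?mulr0n ?mulr1n ?mulr1 ?mulr0 //.
    by rewrite (dz i ir (ltn_ord i)) // ij.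
  by rewrite eqmxMfull ?row_full_unit // rank_pid_mx.
exists f; split.
- move=> a b; apply/rowP => k; rewrite /f.
  have -> : (a - b) *m L = a *m L - b *m L by exact: mulmxBl.
  by rewrite !mxE.
- move=> z; pose b := \row_(i < n) (if insub (val i) is Some k then z 0 k else 0).
  exists (b *m invmx L); apply/rowP => k; rewrite mxE mulmxKV // mxE /=.
  by rewrite valK.
- move=> a; rewrite dM !mulmxA.
  have -> : (a *m L *m D *m R == 0) = (a *m L *m D == 0).
    apply/eqP/eqP => [h|->]; last by rewrite mul0mx.
    by rewrite -(mulmxK uR (a *m L *m D)) h mul0mx.
  rewrite key; apply/eqP/forallP => [h k|h].
    by move/rowP: h => /(_ k); rewrite !mxE => ->.
  by apply/rowP => k; rewrite [RHS]mxE; apply/eqP; rewrite /f mxE; exact: h.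
Qed.
Lemma rank_same_ker (F : fieldType) n m1 m2 (A : 'M[F]_(n, m1)) (B : 'M[F]_(n, m2)) :
  (forall a : 'rV_n, (a *m A == 0) = (a *m B == 0)) -> \rank A = \rank B.
Proof.
move=> H.
have sub : forall m1 m2 (A : 'M[F]_(n, m1)) (B : 'M[F]_(n, m2)),
   (forall a : 'rV_n, (a *m A == 0) -> (a *m B == 0)) -> (kermx A <= kermx B)%MS.
  move=> k1 k2 A1 B1 H1; apply/sub_kermxP; apply/row_matrixP => i.
  rewrite row_mul row0; apply/eqP/H1; rewrite -row_mul.
  by rewrite (sub_kermxP (submx_refl (kermx A1))) row0.
have e : \rank (kermx A) = \rank (kermx B).
  apply/eqP; rewrite eqn_leq !mxrankS //; apply: sub => a; by rewrite H.
move: e; rewrite !mxrank_ker => e.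
have := rank_leq_row A; have := rank_leq_row B; lia.
Qed.

Lemma resP_eq0 gT (G P : {group gT}) p (psi : 'CF(G)) : (p.-Sylow(G) P)%g ->
  ('Res[P] psi == 0) =
  [forall k : Iirr G, (p.-elt (repr (irr_class k)))%g ==> (psi (repr (irr_class k)) == 0)].
Proof.
move=> sylP; have sPG := pHall_sub sylP; have pP := pHall_pgroup sylP.
apply/eqP/forallP => [R0 k | H].
  apply/implyP => pk.
  have Gk : repr (irr_class k) \in G.
    have := mem_repr_classes (irr_classP k).
    case/imsetP: (irr_classP k) => y Gy ->; case/imsetP => z Gz ->; exact: groupJ.
  have cG : (<[repr (irr_class k)]> \subset G)%g by rewrite cycle_subG.
  have pg : (p.-group <[repr (irr_class k)]>)%g by [].
  have [y Gy sub] := Sylow_Jsub sylP cG pg.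
  have : (repr (irr_class k) ^ y \in P)%g by apply: (subsetP sub); rewrite memJ_conjg cycle_id.
  move=> Px; rewrite -(cfunJ _ _ Gy) -(cfResE _ sPG Px) R0 cfunE.
  exact: eqxx.
apply/cfunP => x; rewrite cfunE.
have [Px|nPx] := boolP (x \in P); last by rewrite cfun0.
rewrite cfResE //.
have Gx : x \in G by apply: (subsetP sPG).
have px : (p.-elt x)%g := mem_p_elt pP Px.
have := H (class_Iirr G (x ^: G)%g); rewrite class_IirrK ?mem_classes // cfun_repr.
have pr : (p.-elt (repr (x ^: G)))%g.
  by case/imsetP: (mem_repr_classes (mem_classes Gx)) => z Gz ->; rewrite p_eltJ.
by rewrite pr => /eqP.
Qed.

Lemma rank_char gT (G P : {group gT}) p : (p.-Sylow(G) P)%g ->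
  \rank (\matrix_(i < Nirr G, j < Nirr P) '[ 'Res[P] 'chi[G]_i, 'chi[P]_j]) = num_p_classes p G.
Proof.
move=> sylP.
set N := \matrix_(i, j) _.
pose S := [set k : Iirr G | (p.-elt (repr (irr_class k)))%g].
pose E : 'M[algC]_(Nirr G, #|S|) := \matrix_(k, l) ((k == enum_val l)%:R).
have rE : \rank E = #|S|.
  have EE : E^T *m E = 1%:M.
    apply/matrixP => l l'; rewrite !mxE (bigD1 (enum_val l)) //= big1 => [|k nk].
      by rewrite !mxE eqxx mul1r addr0 (inj_eq enum_val_inj).
    by rewrite !mxE (negPf nk) mul0r.
  apply/eqP; rewrite eqn_leq rank_leq_col /=; rewrite -{1}(@mxrank1 algC #|S|) -EE.
  exact: mxrankM_maxr.
have rK : \rank (character_table G *m E) = #|S|.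
  by rewrite eqmxMfull ?row_full_unit ?character_table_unit.
have -> : num_p_classes p G = #|S|.
  rewrite /num_p_classes -(card_imset _ (can_inj (@irr_classK _ G))).
  apply: eq_card => xG; rewrite !inE.
  apply/andP/imsetP => [[cG pe] | [k kS ->]].
    by exists (class_Iirr G xG); rewrite ?inE class_IirrK.
  by rewrite irr_classP; rewrite inE in kS.
rewrite -rK; apply: rank_same_ker => a.
pose psi := \sum_i a 0 i *: 'chi[G]_i.
have cN : forall j, '['Res[P] psi, 'chi_j] = (a *m N) 0 j.
  move=> j; rewrite mxE linear_sum cfdot_suml; apply: eq_bigr => i _.
  by rewrite linearZ cfdotZl mxE.
have -> : (a *m N == 0) = ('Res[P] psi == 0).
  apply/eqP/eqP => [h | h].
    rewrite [LHS]cfun_sum_cfdot big1 // => j _.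
    by rewrite cN h mxE scale0r.
  by apply/rowP => j; rewrite -cN h cfdot0l mxE.
have -> : (a *m (character_table G *m E) == 0) = [forall k : Iirr G,
   (p.-elt (repr (irr_class k)))%g ==> (psi (repr (irr_class k)) == 0)].
  have cK : forall l, (a *m (character_table G *m E)) 0 l = psi (repr (irr_class (enum_val l))).
    move=> l; rewrite mulmxA mxE (bigD1 (enum_val l)) //= big1 => [|k nk]; last first.
      by rewrite [X in _ * X]mxE (negPf nk) mulr0.
    rewrite [X in _ * X]mxE eqxx mulr1 addr0 mxE sum_cfunE; apply: eq_bigr => i _.
    by rewrite cfunE mxE.
  apply/eqP/forallP => [h k | h].
    apply/implyP => kS; have kS' : k \in S by rewrite inE.
    by have := cK (enum_rank_in kS' k); rewrite enum_rankK_in // h mxE => <-.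
  apply/rowP => l; rewrite cK mxE; have := h (enum_val l); have := enum_valP l.
  by rewrite inE => -> /eqP.
by rewrite (resP_eq0 _ sylP).
Qed.

Lemma kerN gT (G P : {group gT}) (a : 'rV[algC]_(Nirr G)) :
  (a *m (\matrix_(i < Nirr G, j < Nirr P) '[ 'Res[P] 'chi[G]_i, 'chi[P]_j]) == 0)
  = ('Res[P] (\sum_i a 0 i *: 'chi[G]_i) == 0).
Proof.
set N := \matrix_(i, j) _; set psi := \sum_i _.
have cN : forall j, '['Res[P] psi, 'chi_j] = (a *m N) 0 j.
  move=> j; rewrite mxE linear_sum cfdot_suml; apply: eq_bigr => i _.
  by rewrite linearZ cfdotZl mxE.
apply/eqP/eqP => [h | h].
  rewrite [LHS]cfun_sum_cfdot big1 // => j _.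
  by rewrite cN h mxE scale0r.
by apply/rowP => j; rewrite -cN h cfdot0l mxE.
Qed.

Lemma map_int_eq0 k l (A : 'M[int]_(k, l)) :
  (map_mx (intr : int -> algC) A == 0) = (A == 0).
Proof.
apply/eqP/eqP => [h|->]; last by apply/matrixP => i j; rewrite !mxE.
apply/matrixP => i j; have := congr1 (fun B : 'M[algC]_(k, l) => B i j) h.
by rewrite !mxE => /eqP; rewrite intr_eq0 => /eqP.
Qed.

Theorem proposition9p5 (gT : finGroupType) (G P : {group gT}) (p : nat) :
  prime p -> (P \in 'Syl_p(G))%g ->
  quotient_iso_Zpow (virtual_chars G) (res_kernel G P) (num_p_classes p G).
Proof.
move=> pr sylP'; have sylP : (p.-Sylow(G) P)%g by rewrite inE in sylP'.
pose N := \matrix_(i < Nirr G, j < Nirr P) '[ 'Res[P] 'chi[G]_i, 'chi[P]_j].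
pose Mz : 'M[int]_(Nirr G, Nirr P) := \matrix_(i, j) Num.floor (N i j).
have MzC : map_mx intr Mz = N.
  apply/matrixP => i j; rewrite !mxE floorK //.
  exact: Cint_cfdot_vchar_irr (cfRes_vchar _ (irr_vchar _)).
have [r [rr [f [fB fS fK]]]] := snf_lattice Mz.
rewrite MzC (rank_char sylP) in rr; subst r.
pose co (phi : 'CF(G)) : 'rV[int]_(Nirr G) := \row_i Num.floor '[phi, 'chi_i].
have coE : forall phi, phi \in 'Z[irr G]%g ->
    map_mx intr (co phi) = \row_i '[phi, 'chi_i] :> 'rV[algC]_(Nirr G).
  by move=> phi Zphi; apply/rowP => i; rewrite !mxE floorK // Cint_cfdot_vchar_irr.
exists (fun phi => f (co phi)); split.
- move=> a b Za Zb; rewrite -fB; congr f.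
  have {}Za : a \in 'Z[irr G]%g := Za; have {}Zb : b \in 'Z[irr G]%g := Zb.
  apply/rowP => i; rewrite !mxE; apply: (@intr_inj algC).
  have Ia := Cint_cfdot_vchar_irr i Za; have Ib := Cint_cfdot_vchar_irr i Zb.
  have Iab := Cint_cfdot_vchar_irr i (rpredB Za Zb).
  by rewrite rmorphB /= !floorK // cfdotBl.
- move=> z; have [a fa] := fS z.
  pose phi := \sum_i ((a 0 i)%:~R : algC) *: 'chi[G]_i.
  exists phi.
    have Zp : phi \in 'Z[irr G]%g.
      apply: rpred_sum => i _.
      by rewrite scaler_int rpredMz // irr_vchar.
    exact: Zp.
  rewrite -fa; congr f; apply/rowP => i; rewrite mxE cfdot_suml (bigD1 i) //= big1.
    by rewrite cfdotZl cfdot_irr eqxx mulr1 addr0 intrKfloor.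
  by move=> k ki; rewrite cfdotZl cfdot_irr (negPf ki) mulr0.
- move=> phi Zphi; have {}Zphi : phi \in 'Z[irr G]%g := Zphi.
  rewrite fK /res_kernel inE Zphi /= -map_int_eq0 map_mxM MzC coE //.
  rewrite kerN; congr (_ == 0); congr ('Res _).
  by rewrite [RHS]cfun_sum_cfdot; apply: eq_bigr => i _; rewrite mxE.
Qed.
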